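(* Let $A$ be a doubly nonnegative matrix whose largest eigenvalue $\lambda_1$ has multiplicity one, with corresponding eigenvector $x_1$. Then for any constant $r>0$, the matrix $B=A+r\,x_1x_1^T$ satisfies $B^t\ge A^t$ entry-wise for all $t\ge 0$.
   Context: A real matrix is doubly nonnegative if it is symmetric, positive semidefinite, and entry-wise nonnegative. For a positive semidefinite matrix $C=\sum_i\mu_iy_iy_i^T$ (orthonormal eigenvectors $y_i$, eigenvalues $\mu_i\ge0$) and $t>0$, $C^t=\sum_i\mu_i^ty_iy_i^T$, and $C^0=I$. *)

(* Defs.v *)
From HB Require Import structures.
From mathcomp Require Import all_boot all_order all_algebra.
From mathcomp Require Import reals exp.
Set Implicit Arguments. Unset Strict Implicit. Unset Printing Implicit Defensive.
Import Order.TTheory GRing.Theory Num.Theory.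
Local Open Scope ring_scope.

Definition psd (R : realType) (n : nat) (C : 'M[R]_n) : Prop :=
  C^T = C /\ forall x : 'cV[R]_n, 0 <= (x^T *m C *m x) 0 0.

Definition doubly_nonnegative (R : realType) (n : nat) (A : 'M[R]_n) : Prop :=
  psd A /\ forall i j, 0 <= A i j.

Definition psd_eigendecomp (R : realType) (n : nat) (C : 'M[R]_n)
    (Y : 'M[R]_n) (mu : 'I_n -> R) : Prop :=
  Y^T *m Y = 1%:M /\ (forall i, 0 <= mu i) /\
  C = \sum_(i < n) mu i *: (col i Y *m (col i Y)^T).

(* P = C^t : P = \sum_i mu_i^t y_i y_i^T for some orthonormal eigendecomposition
   of C (the paper's definition; powR 0 0 = 1, so C^0 = I). *)
Definition is_mpow (R : realType) (n : nat) (C : 'M[R]_n) (t : R)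
    (P : 'M[R]_n) : Prop :=
  exists (Y : 'M[R]_n) (mu : 'I_n -> R), psd_eigendecomp C Y mu /\
    P = \sum_(i < n) powR (mu i) t *: (col i Y *m (col i Y)^T).

(* Main.v *)
Require Import Defs.
From HB Require Import structures.
From mathcomp Require Import all_boot all_order all_algebra.
From mathcomp Require Import reals exp.
From mathcomp Require Import ring lra.
Import Order.TTheory GRing.Theory Num.Theory.
Local Open Scope ring_scope.

Section Helpers.
Variable R : realType.

Lemma sum_rank1 n (Y : 'M[R]_n) (a : 'I_n -> R) :
  \sum_(i < n) a i *: (col i Y *m (col i Y)^T) = Y *m diag_mx (\row_i a i) *m Y^T.
Proof.
apply/matrixP => p q; rewrite summxE mul_mx_diag !mxE.
apply: eq_bigr => i _; rewrite !mxE big_ord1 !mxE; ring.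
Qed.

Lemma sum_rank1_entry n (Y : 'M[R]_n) (a : 'I_n -> R) p q :
  (\sum_(i < n) a i *: (col i Y *m (col i Y)^T)) p q = \sum_(i < n) a i * (Y p i * Y q i).
Proof.
rewrite summxE; apply: eq_bigr => i _; rewrite !mxE big_ord1 !mxE //.
Qed.

Lemma fcalc_uniq n (Y Z : 'M[R]_n) (d e : 'I_n -> R) (f : R -> R) :
  Y^T *m Y = 1%:M -> Z^T *m Z = 1%:M ->
  Y *m diag_mx (\row_i d i) *m Y^T = Z *m diag_mx (\row_i e i) *m Z^T ->
  Y *m diag_mx (\row_i f (d i)) *m Y^T = Z *m diag_mx (\row_i f (e i)) *m Z^T.
Proof.
move=> hY hZ hC.
have hY' := mulmx1C hY; have hZ' := mulmx1C hZ.
set M := Y^T *m Z.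
have hDM : diag_mx (\row_i d i) *m M = M *m diag_mx (\row_i e i).
  have : Y^T *m (Y *m diag_mx (\row_i d i) *m Y^T) *m Z =
         Y^T *m (Z *m diag_mx (\row_i e i) *m Z^T) *m Z by rewrite hC.
  rewrite !mulmxA hY mul1mx -!mulmxA hZ mulmx1 => ->.
  by rewrite /M !mulmxA.
have hfM : diag_mx (\row_i f (d i)) *m M = M *m diag_mx (\row_i f (e i)).
  apply/matrixP => i j; move: (congr1 (fun m : 'M[R]_n => m i j) hDM).
  rewrite !mul_diag_mx !mul_mx_diag !mxE.
  set m := (\sum_j0 _); have [->|nz] := eqVneq m 0; first by rewrite !mulr0 !mul0r.
  by rewrite mulrC => h; rewrite (mulfI nz h) mulrC.
rewrite -[LHS]mulmx1 -hZ' !mulmxA.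
rewrite -(mulmxA (Y *m _) Y^T Z) -/M -(mulmxA Y) hfM.
by rewrite /M !mulmxA hY' mul1mx.
Qed.

Lemma char_poly_conj n (Y : 'M[R]_n) (D : 'M[R]_n) :
  Y^T *m Y = 1%:M -> char_poly (Y *m D *m Y^T) = char_poly D.
Proof.
move=> hY; have hY' := mulmx1C hY.
have hP : map_mx (@polyC R) Y *m map_mx (@polyC R) Y^T = 1%:M.
  by rewrite -map_mxM hY' map_mx1.
rewrite /char_poly /char_poly_mx.
have -> : 'X%:M - map_mx polyC (Y *m D *m Y^T) =
   map_mx polyC Y *m ('X%:M - map_mx polyC D) *m map_mx polyC Y^T.
  rewrite mulmxBr mulmxBl !map_mxM mul_mx_scalar -scalemxAl -mul_scalar_mx.
  by rewrite hP mulmx1.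
by rewrite !det_mulmx mulrAC -det_mulmx hP det1 mul1r.
Qed.

Lemma mup_diag_two n (d : 'I_n -> R) x i k :
  i != k -> d i = x -> d k = x ->
  (2 <= mup x (char_poly (diag_mx (\row_j d j))))%N.
Proof.
move=> ik hi hk.
rewrite char_poly_trig ?diag_mx_is_trig //.
under eq_bigr do rewrite !mxE eqxx mulr1n.
rewrite -(big_map d xpredT (fun y => 'X - y%:P)) mu_prod_XsubC count_map -sum1_count /=.
rewrite (bigD1 k) /=; last by rewrite hk.
by rewrite (bigD1 i) //= hi eqxx ik.
Qed.
End Helpers.

Theorem theorem5p2 (R : realType) (n : nat) (A : 'M[R]_n)
    (lambda1 : R) (x1 : 'cV[R]_n) (r : R) :
  doubly_nonnegative A ->
  (* lambda1 is an eigenvalue of A, of (algebraic) multiplicity one *)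
  mup lambda1 (char_poly A) = 1%N ->
  (* lambda1 is the largest eigenvalue *)
  (forall mu : R, eigenvalue A mu -> mu <= lambda1) ->
  (* x1 is a corresponding eigenvector *)
  x1 != 0 -> A *m x1 = lambda1 *: x1 ->
  0 < r ->
  forall (t : R), 0 <= t ->
  forall (Bt At : 'M[R]_n),
    is_mpow (A + r *: (x1 *m x1^T)) t Bt -> is_mpow A t At ->
    forall i j, At i j <= Bt i j.
Proof.
move=> [[hAT hApsd] hAnn] hmup hmax hx1nz hAx1 hr t ht Bt At
  [Z [nu [[hZ [hnu hB]] hBt]]] [Y [mu [[hY [hmu hA]] hAt]]].
rewrite sum_rank1 in hA hB.
have hY' := mulmx1C hY.
set D := diag_mx (\row_i mu i) in hA.
have [c hcdef] : {c : 'cV[R]_n | c = Y^T *m x1} by exists (Y^T *m x1).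
have hx1 : x1 = Y *m c by rewrite hcdef mulmxA hY' mul1mx.
have hDc : forall i, mu i * c i 0 = lambda1 * c i 0.
  have : D *m c = lambda1 *: c.
    have e1 : Y^T *m A = D *m Y^T by rewrite hA !mulmxA hY mul1mx.
    by rewrite hcdef mulmxA -e1 -mulmxA hAx1 scalemxAr.
  move=> /matrixP h i; move: (h i 0); rewrite mul_diag_mx !mxE //.
have hc0 : c != 0 by apply: contraNneq hx1nz => hc; rewrite hx1 hc mulmx0.
have [k hck] : exists k, c k 0 != 0.
  by case/matrix0Pn: hc0 => k [j]; rewrite (ord1 j) => h; exists k.
have hmuk : mu k = lambda1 by apply: (mulIf hck); apply: hDc.
have hle : forall i, mu i <= lambda1.
  move=> i; apply: hmax; apply/eigenvalueP; exists (row i Y^T).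
    have hrD : row i (1%:M : 'M[R]_n) *m D = mu i *: row i 1%:M.
      rewrite -row_mul mul1mx; apply/matrixP => a b; rewrite !mxE.
      by case: eqP => [->|]; rewrite ?mulr1n ?mulr0n ?mulr0 ?mulr1.
    by rewrite hA !mulmxA -row_mul hY hrD -scalemxAl -row_mul mul1mx.
  apply/eqP => h0.
  have : row i Y^T *m Y = row i 1%:M by rewrite -row_mul hY.
  rewrite h0 mul0mx => /matrixP /(_ 0 i); rewrite !mxE eqxx /= => /eqP.
  by rewrite eq_sym oner_eq0.
have huniq : forall i, mu i = lambda1 -> i = k.
  move=> i hi; case: (eqVneq i k) => // ik; exfalso.
  have := @mup_diag_two R n mu lambda1 i k ik hi hmuk.
  by rewrite -/D -(@char_poly_conj R n Y D hY) -hA hmup.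
have hci : forall i, i != k -> c i 0 = 0.
  move=> i ik; case: (eqVneq (c i 0) 0) => // nz.
  by have := huniq i (mulIf nz (hDc i)); move/eqP: ik.
have quad : forall u : 'cV[R]_n,
    (u^T *m A *m u) 0 0 = \sum_q \sum_p u p 0 * A p q * u q 0.
  move=> u; rewrite mxE; apply: eq_bigr => q _; rewrite mxE big_distrl.
  by apply: eq_bigr => p _; rewrite !mxE.
have hpk : forall p q, 0 <= Y p k * Y q k.
  pose v := \col_p `|x1 p 0|.
  pose w := Y^T *m v.
  have hv : v = Y *m w by rewrite /w mulmxA hY' mul1mx.
  have h1 : (x1^T *m A *m x1) 0 0 <= (v^T *m A *m v) 0 0.
    rewrite !quad; apply: ler_sum => q _; apply: ler_sum => p _; rewrite !mxE.
    apply: le_trans (ler_norm _) _.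
    by rewrite !normrM (ger0_norm (hAnn p q)).
  have h2 : (x1^T *m A *m x1) 0 0 = lambda1 * (x1^T *m x1) 0 0.
    by rewrite -mulmxA hAx1 -scalemxAr mxE.
  have h3 : (x1^T *m x1) 0 0 = (v^T *m v) 0 0.
    rewrite !mxE; apply: eq_bigr => p _; rewrite !mxE.
    by case: (lerP 0 (x1 p 0)) => h; [rewrite ger0_norm | rewrite ltr0_norm] => //; ring.
  have h4 : (v^T *m A *m v) 0 0 = \sum_i mu i * w i 0 ^+ 2.
    have -> : v^T *m A *m v = w^T *m D *m w.
      rewrite hv hA trmx_mul !mulmxA -(mulmxA w^T Y^T Y) hY mulmx1.
      by rewrite -(mulmxA _ Y^T Y) hY mulmx1.
    rewrite mxE; apply: eq_bigr => i _; rewrite mul_mx_diag !mxE; ring.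
  have h5 : (v^T *m v) 0 0 = \sum_i w i 0 ^+ 2.
    have -> : v^T *m v = w^T *m w.
      by rewrite hv trmx_mul -(mulmxA w^T) (mulmxA Y^T) hY mul1mx.
    by rewrite mxE; apply: eq_bigr => i _; rewrite !mxE expr2.
  have hsum : \sum_i (lambda1 - mu i) * w i 0 ^+ 2 = 0.
    apply/eqP; rewrite eq_le; apply/andP; split; last first.
      by apply: sumr_ge0 => i _; rewrite mulr_ge0 ?sqr_ge0 // subr_ge0.
    have : lambda1 * \sum_i w i 0 ^+ 2 <= \sum_i mu i * w i 0 ^+ 2.
      by rewrite -h5 -h3 -h4 -h2.
    rewrite mulr_sumr -subr_ge0 -sumrB => h.
    rewrite -oppr_ge0 -sumrN; apply: le_trans h _; rewrite le_eqVlt; apply/orP; left.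
    by apply/eqP; apply: eq_bigr => i _; ring.
  have hw : forall i, i != k -> w i 0 = 0.
    move=> i ik.
    have hge : forall j : 'I_n, true -> 0 <= (lambda1 - mu j) * w j 0 ^+ 2.
      by move=> j _; rewrite mulr_ge0 ?sqr_ge0 // subr_ge0.
    have := psumr_eq0P hge hsum (i:=i) isT; move/eqP; rewrite mulf_eq0 subr_eq0 sqrf_eq0.
    case/orP => [h|/eqP //]; exfalso; move/eqP: ik; apply; apply: huniq.
    by move/eqP: h.
  have hvp : forall p, v p 0 = Y p k * w k 0.
    move=> p; rewrite hv mxE (bigD1 k) //= big1 ?addr0 // => i ik.
    by rewrite hw // mulr0.
  have hwk : w k 0 != 0.
    apply: contraNneq hx1nz => h; apply/eqP/matrixP => p j; rewrite (ord1 j) mxE.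
    have := hvp p; rewrite h mulr0 /v mxE => /eqP; rewrite normr_eq0 => /eqP //.
  move=> p q.
  have : 0 <= v p 0 * v q 0 by rewrite !mxE mulr_ge0 ?normr_ge0.
  rewrite !hvp (_ : Y p k * w k 0 * (Y q k * w k 0) = Y p k * Y q k * w k 0 ^+ 2); last by ring.
  by rewrite pmulr_lge0 // lt_neqAle sqr_ge0 andbT eq_sym sqrf_eq0.
have hcc : c *m c^T = diag_mx (\row_i c i 0 ^+ 2).
  apply/matrixP => a b; rewrite !mxE big_ord1 !mxE.
  case: (eqVneq a b) => [->|ab]; first by rewrite mulr1n expr2.
  rewrite mulr0n; case: (eqVneq a k) => [hak|ak]; last by rewrite hci // mul0r.
  by rewrite (hci b) ?mulr0 // -hak eq_sym.
pose mu' i := mu i + r * c i 0 ^+ 2.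
have hBY : A + r *: (x1 *m x1^T) = Y *m diag_mx (\row_i mu' i) *m Y^T.
  have -> : diag_mx (\row_i mu' i) = D + r *: (c *m c^T).
    rewrite hcc; apply/matrixP => a b; rewrite !mxE.
    by case: eqP => _; rewrite ?mulr1n ?mulr0n ?mulr0 ?addr0.
  rewrite hA hx1 trmx_mul mulmxDr mulmxDl -scalemxAr -scalemxAl !mulmxA //.
rewrite sum_rank1 in hB.
have hu := @fcalc_uniq R n Y Z mu' nu (fun x => x `^ t) hY hZ (etrans (esym hBY) hB).
rewrite sum_rank1 in hBt; rewrite -hu -sum_rank1 in hBt.
move=> p q; rewrite hAt hBt !sum_rank1_entry.
apply: ler_sum => l _; case: (eqVneq l k) => [->|lk].
  rewrite [_ * (Y p k * Y q k)]mulrC [X in _ <= X]mulrC.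
  have hrc : 0 <= r * c k 0 ^+ 2 by rewrite mulr_ge0 ?sqr_ge0 // ltW.
  apply: ler_wpM2l; first exact: hpk.
  apply: (ge0_ler_powR ht); rewrite ?nnegrE /mu' /=.
  - exact: hmu.
  - by rewrite addr_ge0 ?hmu.
  - by rewrite lerDl.
by rewrite /mu' hci // expr2 !mulr0 addr0.
Qed.
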